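(* Let $(Y,d)$ be a metric space, let $\mathcal M\subset Y$ be a finite-dimensional log-Lipschitz manifold (over $\mathbb R^N$), and let $X\subset\mathcal M$ be compact. Then $$\dim_{Log-D}(X):=\limsup_{\varepsilon\to0}\frac{\log D_\varepsilon(X)}{\log\log\frac1\varepsilon}<\infty .$$
   Context: A map $T:X_1\to X_2$ between metric spaces is log-Lipschitz if there exist $\gamma\in(0,\infty)$ and $C>0$ such that $d(Tx_1,Tx_2)\le C\,d(x_1,x_2)\big(\log\frac{C}{d(x_1,x_2)}\big)^\gamma$ for all $x_1,x_2\in X_1$; $T$ is a bi-log-Lipschitz homeomorphism if $T$ and $T^{-1}$ are both log-Lipschitz. $\mathcal M$ is a log-Lipschitz manifold over $\mathbb R^N$ if it is locally homeomorphic to $\mathbb R^N$ and all coordinate maps (from open subsets of $\mathcal M$ onto open subsets of $\mathbb R^N$) are bi-log-Lipschitz with the same constants $C$ and $\gamma$. For a compact metric space $X$ and $B\subset X$, $N_\varepsilon(B,X)$ denotes the minimal number of $\varepsilon$-balls of $X$ covering $B$. The doubling factor is $D_\varepsilon(X):=\sup_{x\in X}N_{\varepsilon/2}(B(\varepsilon,x),X)$, where $B(r,x)$ is the ball of radius $r$ in $X$ centered at $x$. *)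

(* Defs.v *)
From HB Require Import structures.
From mathcomp Require Import all_boot all_order all_algebra.
From mathcomp Require Import all_classical all_reals all_analysis.
Set Implicit Arguments. Unset Strict Implicit. Unset Printing Implicit Defensive.
Import Order.TTheory GRing.Theory Num.Theory.
Local Open Scope classical_set_scope.
Local Open Scope ring_scope.

Section Defs.
Variable R : realType.

Definition is_metric (T : Type) (d : T -> T -> R) : Prop :=
  [/\ forall x y, 0 <= d x y,
      forall x y, d x y = 0 <-> x = y,
      forall x y, d x y = d y x &
      forall x y z, d x z <= d x y + d y z].

Definition euclid (N : nat) (u v : 'rV[R]_N) : R :=
  Num.sqrt (\sum_(i < N) (u ord0 i - v ord0 i) ^+ 2).

Definition dball (T : Type) (d : T -> T -> R) (r : R) (x : T) : set T :=
  [set y | d x y < r].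

Definition rel_open (T : Type) (d : T -> T -> R) (A U : set T) : Prop :=
  U `<=` A /\ forall x, U x -> exists2 r : R, 0 < r & dball d r x `&` A `<=` U.

Definition mcompact (T : Type) (d : T -> T -> R) (X : set T) : Prop :=
  forall (I : Type) (U : I -> set T),
    (forall i, rel_open d setT (U i)) -> X `<=` \bigcup_i U i ->
    exists (n : nat) (f : nat -> I),
      X `<=` \bigcup_(k in [set k : nat | (k < n)%N]) U (f k).

(* The inequality is required where it is meaningful, i.e. for 0 < d1 < C
   (so that log(C/d1) > 0). *)
Definition loglip (T1 T2 : Type) (d1 : T1 -> T1 -> R) (d2 : T2 -> T2 -> R)
  (A : set T1) (f : T1 -> T2) (C gamma : R) : Prop :=
  forall x1 x2, A x1 -> A x2 -> 0 < d1 x1 x2 < C ->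
    d2 (f x1) (f x2) <= C * d1 x1 x2 * (ln (C / d1 x1 x2)) `^ gamma.

Definition loglip_chart (T : Type) (d : T -> T -> R) (M : set T) (N : nat)
  (C gamma : R) (U : set T) (V : set 'rV[R]_N)
  (phi : T -> 'rV[R]_N) (psi : 'rV[R]_N -> T) : Prop :=
  [/\ rel_open d M U, rel_open (@euclid N) setT V,
      (forall x, U x -> V (phi x) /\ psi (phi x) = x),
      (forall v, V v -> U (psi v) /\ phi (psi v) = v) &
      loglip d (@euclid N) U phi C gamma /\
      loglip (@euclid N) d V psi C gamma].

Definition loglip_manifold (T : Type) (d : T -> T -> R) (M : set T) (N : nat)
  : Prop :=
  exists C gamma : R, [/\ 0 < C, 0 < gamma &
    forall x, M x -> exists U V phi psi,
      U x /\ @loglip_chart T d M N C gamma U V phi psi].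

Definition covnum (T : Type) (d : T -> T -> R) (eps : R) (B X : set T) : R :=
  inf [set (n%:R : R) | n in [set n : nat | exists c : nat -> T,
         (forall i, (i < n)%N -> X (c i)) /\
         B `<=` \bigcup_(i in [set i : nat | (i < n)%N]) dball d eps (c i)]].

Definition doubling (T : Type) (d : T -> T -> R) (eps : R) (X : set T) : R :=
  sup [set covnum d (eps / 2) (dball d eps x `&` X) X | x in X].

End Defs.

(* Main.v *)
Require Import Defs.
From HB Require Import structures.
From mathcomp Require Import all_boot all_order all_algebra.
From mathcomp Require Import all_classical all_reals all_analysis.
From mathcomp Require Import lra ring.
Import Order.TTheory GRing.Theory Num.Theory.
Import numFieldTopology.Exports numFieldNormedType.Exports.
Local Open Scope classical_set_scope.
Local Open Scope ring_scope.
Lemma powRexp (R : realType) (a g : R) : 0 < a -> a `^ g = expR (g * ln a).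
Proof. by move=> a0; rewrite -[LHS]lnK ?ln_powR // posrE powR_gt0. Qed.

Lemma lnCt (R : realType) (C t : R) : 0 < C -> 0 < t -> ln (C / t) = ln C - ln t.
Proof. by move=> C0 t0; rewrite lnM ?posrE ?invr_gt0 // lnV ?posrE. Qed.

Lemma fmono (R : realType) (C g t1 t2 : R) : 0 < C -> 0 < g -> 0 < t1 -> t1 <= t2 ->
  t2 <= C * expR (- g) ->
  t1 * ln (C / t1) `^ g <= t2 * ln (C / t2) `^ g.
Proof.
move=> C0 g0 t10 t12 t2C.
have t20 : 0 < t2 by apply: lt_le_trans t12.
have g2g : g <= ln (C / t2).
  rewrite -[g]expRK ler_ln ?posrE ?expR_gt0 ?divr_gt0 //.
  rewrite ler_pdivlMr // mulrC -ler_pdivlMr ?expR_gt0 //.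
  by rewrite -expRN.
set g2 := ln (C / t2) in g2g.
have g20 : 0 < g2 by apply: lt_le_trans g2g.
set v := ln t2 - ln t1.
have v0 : 0 <= v by rewrite subr_ge0 ler_ln ?posrE.
have g1E : ln (C / t1) = g2 + v.
  by rewrite /g2 /v !lnCt // addrA subrK.
have g10 : 0 < g2 + v by apply: (lt_le_trans g20); rewrite lerDl.
rewrite g1E !powRexp // -[t1]lnK ?posrE // -[t2]lnK ?posrE // -!expRD ler_expR.
have h1 : ln (g2 + v) <= ln g2 + v / g2.
  have -> : g2 + v = g2 * (1 + v / g2) by rewrite mulrDr mulr1 mulrCA divff ?gt_eqF // mulr1.
  rewrite lnM ?posrE // ?lerD2l; last first.
    by apply: (lt_le_trans ltr01); rewrite lerDl divr_ge0 // ltW.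
  by apply: le_ln1Dx; apply: lt_le_trans (divr_ge0 v0 (ltW g20)); rewrite ltrN10.
have h2 : g * (v / g2) <= v.
  by rewrite mulrCA ler_piMr // ler_pdivrMr // mul1r.
rewrite lnK ?posrE // -/g2.
have h3 : g * ln (g2 + v) <= g * ln g2 + v.
  by apply: le_trans (ler_wpM2l (ltW g0) h1) _; rewrite mulrDr lerD2l.
have -> : ln t2 = ln t1 + v by rewrite /v addrC subrK.
by rewrite -addrA lerD2l addrC.
Qed.
Lemma euclid_ge0 (R : realType) N (u v : 'rV[R]_N) : 0 <= euclid u v.
Proof. exact: sqrtr_ge0. Qed.

Lemma euclid_coord (R : realType) N (u v : 'rV[R]_N) i :
  `|u ord0 i - v ord0 i| <= euclid u v.
Proof.
rewrite /euclid -sqrtr_sqr ler_sqrt; last by apply: sumr_ge0 => j _; exact: sqr_ge0.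
rewrite (bigD1 i) //= lerDl; apply: sumr_ge0 => j _; exact: sqr_ge0.
Qed.

Lemma euclid_refl (R : realType) N (u : 'rV[R]_N) : euclid u u = 0.
Proof.
by rewrite /euclid big1 ?sqrtr0 // => i _; rewrite subrr expr0n.
Qed.

Lemma euclid_eq0 (R : realType) N (u v : 'rV[R]_N) : euclid u v = 0 -> u = v.
Proof.
move=> /eqP; rewrite /euclid sqrtr_eq0 => h.
have h0 : \sum_(i < N) (u ord0 i - v ord0 i) ^+ 2 = 0.
  by apply/eqP; rewrite eq_le h /=; apply: sumr_ge0 => j _; exact: sqr_ge0.
apply/rowP => i; apply/eqP; rewrite -subr_eq0 -sqrf_eq0; apply/eqP.
by apply: (psumr_eq0P _ h0) => // j _; exact: sqr_ge0.
Qed.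

Lemma euclid_le {R : realType} {N} {u v : 'rV[R]_N} {h : R} : 0 <= h ->
  (forall i, `|u ord0 i - v ord0 i| <= h) -> euclid u v <= N%:R * h.
Proof.
move=> h0 hc; rewrite /euclid -[leRHS]ger0_norm ?mulr_ge0 // -sqrtr_sqr ler_sqrt ?sqr_ge0 //.
apply: (@le_trans _ _ (\sum_(i < N) h ^+ 2)).
  apply: ler_sum => i _; rewrite -real_normK ?num_real // ler_pXn2r ?nnegrE //.
rewrite sumr_const card_ord exprMn -[h ^+ 2 *+ N]mulr_natl ler_wpM2r ?sqr_ge0 //.
rewrite -natrX ler_nat; case: (N) => // n; rewrite expnS leq_pmulr //.
Qed.
Lemma phi_bound {R : realType} {Y : Type} {d : Y -> Y -> R} {N} {C g : R} {U : set Y}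
  {phi : Y -> 'rV[R]_N} {eps : R} {a b} :
  is_metric d -> 0 < C -> 0 < g ->
  loglip d (@euclid R N) U phi C g ->
  0 < eps -> eps < C -> eps <= C * expR (- g) -> U a -> U b -> d a b < eps ->
  euclid (phi a) (phi b) <= C * eps * ln (C / eps) `^ g.
Proof.
move=> [d0 deq _ _] C0 g0 lphi e0 eC eg Ua Ub dab.
case: (eqVneq (d a b) 0) => [/deq->|dn0].
  by rewrite euclid_refl !mulr_ge0 ?powR_ge0 // ltW.
have dpos : 0 < d a b by rewrite lt_neqAle eq_sym dn0 d0.
apply: le_trans (lphi a b Ua Ub _) _; first by rewrite dpos (lt_trans dab eC).
by rewrite -!mulrA ler_wpM2l ?(ltW C0) // fmono // ltW.
Qed.

Lemma psi_bound {R : realType} {Y : Type} {d : Y -> Y -> R} {N} {C g : R} {U : set Y}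
  {V : set 'rV[R]_N} {phi : Y -> 'rV[R]_N} {psi : 'rV[R]_N -> Y} {s eps : R} {a b} :
  is_metric d -> 0 < C -> 0 < g ->
  (forall x, U x -> V (phi x) /\ psi (phi x) = x) ->
  loglip (@euclid R N) d V psi C g ->
  0 < eps -> 0 < s -> s < C -> s <= C * expR (- g) -> C * s * ln (C / s) `^ g < eps ->
  U a -> U b -> euclid (phi a) (phi b) <= s -> d a b < eps.
Proof.
move=> [d0 deq _ _] C0 g0 hUV lpsi e0 s0 sC sg hs Ua Ub es.
have [Va pa] := hUV a Ua; have [Vb pb] := hUV b Ub.
case: (eqVneq (euclid (phi a) (phi b)) 0) => [/euclid_eq0 e|en0].
  by rewrite -pa e pb (proj2 (deq b b) erefl).
have epos : 0 < euclid (phi a) (phi b) by rewrite lt_neqAle eq_sym en0 euclid_ge0.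
have := lpsi (phi a) (phi b) Va Vb; rewrite pa pb => H.
apply: le_lt_trans (H _) _; first by rewrite epos (le_lt_trans es sC).
apply: le_lt_trans hs.
by rewrite -!mulrA ler_wpM2l ?(ltW C0) // fmono.
Qed.
Lemma cell_close {R : realType} {h rho a b : R} {m : nat} :
  0 < h -> `|a| <= rho -> `|b| <= rho -> m = Num.trunc (2 * rho / h) ->
  (inord (Num.trunc ((a + rho) / h)) : 'I_m.+1) = inord (Num.trunc ((b + rho) / h)) ->
  `|a - b| <= h.
Proof.
move=> h0 ha hb mE.
have key : forall c, `|c| <= rho -> 0 <= (c + rho) / h /\ (Num.trunc ((c + rho) / h) < m.+1)%N.
  move=> c hc; have cr : - rho <= c /\ c <= rho by move: hc; rewrite ler_norml => /andP[].
  have x0 : 0 <= (c + rho) / h by rewrite divr_ge0 ?(ltW h0) // -lerBlDr sub0r; case: cr.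
  split => //; rewrite ltnS mE le_truncn // ler_wpM2r ?invr_ge0 ?(ltW h0) //.
  by rewrite mulr2n mulrDl !mul1r lerD2r; case: cr.
have [xa ta] := key a ha; have [xb tb] := key b hb.
move=> /(congr1 val); rewrite /= !inordK // => teq.
have := truncn_itv xa; have := truncn_itv xb; rewrite teq.
set k := Num.trunc _ => /andP[kb bk] /andP[ka ak].
have hab : a - b = h * ((a + rho) / h - (b + rho) / h).
  by rewrite -mulrBl mulrCA divff ?gt_eqF // mulr1 opprD addrACA subrr addr0.
rewrite hab normrM gtr0_norm // ler_piMr ?(ltW h0) //.
rewrite ler_norml; apply/andP; split.
  move: ka bk; rewrite -addn1 natrD; lra.
move: ak kb; rewrite -addn1 natrD; lra.
Qed.
Lemma cover_bound (R : realType) (Y : Type) (d : Y -> Y -> R) (X : set Y) (N : nat)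
  (C g : R) (U : set Y) (V : set 'rV[R]_N) (phi : Y -> 'rV[R]_N)
  (psi : 'rV[R]_N -> Y) (eps s : R) (y : Y) :
  is_metric d -> 0 < C -> 0 < g ->
  (forall x, U x -> V (phi x) /\ psi (phi x) = x) ->
  loglip d (@euclid R N) U phi C g -> loglip (@euclid R N) d V psi C g ->
  0 < eps -> eps < C -> eps <= C * expR (- g) ->
  0 < s -> s < C -> s <= C * expR (- g) -> C * s * ln (C / s) `^ g < eps / 2 ->
  X y -> dball d eps y `&` X `<=` U ->
  covnum d (eps / 2) (dball d eps y `&` X) X <=
  ((Num.trunc (2 * (C * eps * ln (C / eps) `^ g) / (s / N.+1%:R))).+1 ^ N)%:R.
Proof.
move=> dm C0 g0 hUV lphi lpsi e0 eC eg s0 sC sg hs Xy BU.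
have dm' := dm; case: dm' => d0 deq dsym dtri.
set rho := C * eps * _.
set h := s / _.
set m := Num.trunc _.
have h0 : 0 < h by rewrite divr_gt0.
have UB : forall w, X w -> d y w < eps -> U w by move=> w Xw dw; apply: BU.
have Uy : U y by apply: UB => //; rewrite (proj2 (deq y y) erefl).
have Hrho : forall w, X w -> d y w < eps -> euclid (phi y) (phi w) <= rho.
  by move=> w Xw dw; apply: (phi_bound dm C0 g0 lphi) => //; apply: UB.
pose T := {ffun 'I_N -> 'I_m.+1}.
pose key (z : 'rV[R]_N) : T :=
  [ffun i => inord (Num.trunc ((z ord0 i - phi y ord0 i + rho) / h))].
have Hkey : forall w w', X w -> d y w < eps -> X w' -> d y w' < eps ->
    key (phi w) = key (phi w') -> d w w' < eps / 2.
  move=> w w' Xw dw Xw' dw' kE.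
  apply: (psi_bound dm C0 g0 hUV lpsi _ s0 sC sg hs); rewrite ?divr_gt0 //; try exact: UB.
  apply: le_trans (euclid_le (ltW h0) _) _; last first.
    rewrite /h mulrCA ler_piMr ?(ltW s0) // ler_pdivrMr ?ltr0n // mul1r ler_nat.
    exact: leqnSn.
  move=> i.
  have co : forall z, X z -> d y z < eps -> `|phi z ord0 i - phi y ord0 i| <= rho.
    by move=> z Xz dz; rewrite distrC; apply: le_trans (Hrho z Xz dz); exact: euclid_coord.
  have := congr1 (fun f : T => f i) kE; rewrite !ffunE => kEi.
  have := cell_close h0 (co w Xw dw) (co w' Xw' dw') erefl kEi.
  by rewrite opprB addrA subrK.
pose P (k : T) w := X w /\ d y w < eps /\ key (phi w) = k.
pose rep (k : T) : Y := match pselect (exists w, P k w) with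
  | left H => proj1_sig (cid H) | right _ => y end.
have Hrep : forall k, X (rep k) /\ ((exists w, P k w) -> P k (rep k)).
  move=> k; rewrite /rep; case: pselect => [H|nH].
    by case: (cid H) => w Pw /=; split => //; case: Pw.
  by split => // H; exfalso; apply: nH.
pose c (i : nat) := rep (nth (key (phi y)) (enum T) i).
rewrite /covnum; apply: ge_inf.
  by exists 0 => _ [n _ <-]; exact: ler0n.
exists #|T|; last by rewrite card_ffun !card_ord.
exists c; split; first by move=> i _; case: (Hrep (nth (key (phi y)) (enum T) i)).
move=> w [dw Xw].
have iT : (index (key (phi w)) (enum T) < #|T|)%N.
  by rewrite cardE index_mem mem_enum.
exists (index (key (phi w)) (enum T)) => //.
rewrite /dball /c nth_index ?mem_enum //.
have [_ Hr] := Hrep (key (phi w)).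
have [Xr [dr kr]] := Hr (ex_intro _ w (conj Xw (conj dw erefl))).
exact: Hkey.
Qed.
Lemma fin_min {R : realType} (a : nat -> R) n : (forall k, 0 < a k) ->
  exists2 δ : R, 0 < δ & forall k, (k < n)%N -> δ <= a k.
Proof.
move=> apos; elim: n => [|n [δ δ0 Hδ]]; first by exists 1.
exists (Order.min δ (a n)); first by rewrite lt_min δ0 apos.
move=> k; rewrite ltnS leq_eqVlt => /orP[/eqP->|kn]; first by rewrite ge_min lexx orbT.
by rewrite ge_min Hδ.
Qed.

Lemma uniform_chart {R : realType} {Y : Type} {d : Y -> Y -> R} {M X : set Y} {N : nat}
  {C g : R} :
  is_metric d ->
  (forall x, M x -> exists U V phi psi, U x /\ @loglip_chart R Y d M N C g U V phi psi) ->
  X `<=` M -> mcompact d X ->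
  exists2 delta : R, 0 < delta & forall y, X y -> exists U V phi psi,
    @loglip_chart R Y d M N C g U V phi psi /\
    forall eps, eps <= delta -> dball d eps y `&` X `<=` U.
Proof.
move=> [d0 deq dsym dtri] hch XM mX.
have : forall x, exists r : R, 0 < r /\ (X x -> exists U V phi psi,
    @loglip_chart R Y d M N C g U V phi psi /\ dball d r x `&` M `<=` U).
  move=> x; case: (pselect (X x)) => Xx; last by exists 1; split.
  have [U [V [phi [psi [Ux ch]]]]] := hch x (XM x Xx).
  have [[_ hU] _ _ _ _] := ch.
  have [r r0 hr] := hU x Ux.
  by exists r; split => // _; exists U, V, phi, psi.
case/choice => r hr.
pose Ui (x : Y) : set Y := fun z => X x /\ d x z < r x / 2.
have := mX Y Ui.
case.
- move=> x; split => // z [Xx dz]; exists (r x / 2 - d x z); first by rewrite subr_gt0.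
  move=> w [dzw _]; split => //; have := dtri x z w; rewrite /dball /= in dzw; lra.
- move=> x Xx; exists x => //; split => //; rewrite (proj2 (deq x x) erefl).
  by rewrite divr_gt0 //; case: (hr x).
move=> n [f cov].
have [δ δ0 Hδ] := fin_min (fun k => r (f k) / 2) n (fun k => divr_gt0 (proj1 (hr (f k))) (ltr0Sn _ 1)).
exists δ => // y Xy.
have [k kn [Xk dk]] := cov y Xy.
have [_ /(_ Xk) [U [V [phi [psi [ch hUr]]]]]] := hr (f k).
exists U, V, phi, psi; split => // eps epsd z [dz Xz]; apply: hUr; split; last exact: XM.
have := dtri (f k) y z; have := Hδ k kn; rewrite /dball /= in dz *; lra.
Qed.
Lemma cancel4 {R : realType} (C e Q : R) : 0 < C -> 0 < Q -> C * (e / (4*C*Q)) * Q = e/4.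
Proof. move=> C0 Q0; field. by rewrite !gt_eqF. Qed.

Lemma rho_h {R : realType} (C e Q Lg : R) (N : nat) : 0 < C -> 0 < Q -> 0 < e ->
  2 * (C * e * Lg) / ((e / (4 * C * Q)) / N.+1%:R) = 8 * C ^+ 2 * N.+1%:R * Lg * Q.
Proof. move=> C0 Q0 e0; field. by rewrite !gt_eqF ?ltr0Sn. Qed.
Lemma small_le {R : realType} (e Q a : R) : 0 < e -> 0 < Q -> a - ln Q <= - ln e ->
  e <= Q * expR (- a).
Proof.
move=> e0 Q0 h; rewrite -[e]lnK ?posrE // -[Q]lnK ?posrE // -expRD ler_expR.
lra.
Qed.

Lemma paramsA {R : realType} {C g : R} (δ e : R) :
  0 < C -> 0 < g -> 0 < δ -> 0 < e ->
  (3 + 5 * g + ln 4 + expR 1 + 3 * `|ln C| + `|ln (4 * C ^+ 2)| + `|ln δ|) ^+ 2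
     < ln (e^-1) ->
  [/\ e < C, e <= C * expR (- g), e <= δ, e <= 4 * C ^+ 2 * expR (- g) &
   [/\ expR 1 <= ln (e^-1), ln (C / e) = ln C + ln (e^-1), 1 <= ln (C / e),
     ln (2 * ln (C / e)) <= 2 * ln (ln (e^-1)) &
     ln 4 + g * ln (2 * ln (C / e)) <= ln (e^-1)]].
Proof.
move=> C0 g0 δ0 e0.
set B := (3 + _ + _ + _ + _ + _ + _).
set u := ln (e^-1) => Bu.
have uE : u = - ln e by rewrite /u lnV ?posrE.
have l4 : 0 <= ln (4 : R) by rewrite ln_ge0 // ler1n.
have e1 : 0 <= expR (1 : R) := expR_ge0 _.
have c1 : ln C <= `|ln C| := ler_norm _.
have c2 : - ln C <= `|ln C| by rewrite -normrN ler_norm.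
have c3 : ln (4 * C ^+ 2) >= - `|ln (4 * C ^+ 2)| by rewrite lerNl -normrN ler_norm.
have c4 : ln δ >= - `|ln δ| by rewrite lerNl -normrN ler_norm.
have c5 := normr_ge0 (ln C).
have c6 := normr_ge0 (ln (4 * C ^+ 2)).
have c7 := normr_ge0 (ln δ).
have B1 : 1 <= B by rewrite /B; lra.
have BB : B <= B ^+ 2 by rewrite expr2 ler_peMr //; lra.
have uB : B <= u by lra.
have uB2 := uB; rewrite /B in uB2.
have eCg : e <= C * expR (- g) by apply: small_le => //; lra.
have eC1 : e <= C * expR (- 1) by apply: small_le => //; lra.
have eC : e < C.
  by apply: le_lt_trans eC1 _; rewrite gtr_pMr // expR_lt1 ltrN10.
have eδ : e <= δ.
  rewrite -[δ]mulr1 -expR0 -oppr0; apply: small_le => //.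
  lra.
have e4 : e <= 4 * C ^+ 2 * expR (- g).
  by apply: small_le => //; rewrite ?mulr_gt0 ?exprn_gt0 //; lra.
have ue : expR 1 <= u by lra.
set L := ln (C / e).
have LE : L = ln C + u by rewrite /L lnCt // uE.
have L1 : 1 <= L by lra.
have u0 : 0 < u by lra.
set W := 4 * g + ln 4 + 1.
have WB : W <= B by rewrite /W /B; lra.
have uW : W ^+ 2 <= u.
  apply: le_trans (ltW Bu); rewrite ler_pXn2r ?nnegrE //; [rewrite /W; lra | lra].
set su := Num.sqrt u.
have W0 : 0 <= W by rewrite /W; lra.
have W1 : 1 <= W by rewrite /W; lra.
have suW : W <= su by rewrite -(ger0_norm W0) -sqrtr_sqr ler_sqrt //; lra.
have su2 : su * su = u by rewrite -expr2 sqr_sqrtr // ltW.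
have lnu : ln u <= 2 * su.
  have su0 : 0 < su by lra.
  rewrite -su2 lnM ?posrE //.
  have H : ln su <= su - 1.
    by have := @le_ln1Dx R (su - 1); rewrite addrCA subrr addr0; apply; lra.
  lra.
have L2u : 2 * L <= u ^+ 2 by rewrite LE expr2; nra.
have lnL : ln (2 * L) <= 2 * ln u.
  have -> : 2 * ln u = ln (u ^+ 2) by rewrite lnXn // mulr_natl.
  rewrite ler_ln ?posrE ?exprn_gt0 //; lra.
have key1 : ln 4 + g * ln (2 * L) <= u.
  have : g * ln (2 * L) <= g * (4 * su) by rewrite ler_pM2l //; lra.
  have suW' : 4 * g + ln 4 + 1 <= su := suW.
  have h1 : (4 * g + ln 4 + 1) * su <= su * su by rewrite ler_wpM2r //; lra.
  have h2 : ln 4 <= ln 4 * su by rewrite ler_peMr //; lra.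
  lra.
by split.
Qed.
Lemma paramsB {R : realType} {N : nat} {C g : R} (e u L : R) :
  0 < C -> 0 < g -> 0 < e -> e <= 4 * C ^+ 2 * expR (- g) ->
  expR 1 <= u -> ln (C / e) = L -> L = ln C + u -> 1 <= L ->
  ln (2 * L) <= 2 * ln u -> ln 4 + g * ln (2 * L) <= u ->
  exists s, [/\ 0 < s, s < C, s <= C * expR (- g), C * s * ln (C / s) `^ g < e / 2 &
     ln (2 * (C * e * L `^ g) / (s / N.+1%:R) + 1) <=
     (`|ln (8 * C ^+ 2 * N.+1%:R + 1)| + 4 * g) * ln u].
Proof.
move=> C0 g0 e0 e4 ue LE' LE L1 lnL key1.
have [P PE] : exists P, P = (2 * L) `^ g by eexists.
have P1 : 1 <= P.
  rewrite PE powRexp; last by lra.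
  apply: le_trans (expR_ge1Dx _); rewrite lerDl mulr_ge0 ?ln_ge0 ?(ltW g0) //; lra.
have P0 : 0 < P by lra.
exists (e / (4 * C * P)).
have [s sE] : exists s, s = e / (4 * C * P) by eexists.
rewrite -sE.
have s0 : 0 < s by rewrite sE divr_gt0 // !mulr_gt0.
have se : s <= e / (4 * C).
  rewrite sE ler_wpM2l ?(ltW e0) // lef_pV2 ?posrE ?mulr_gt0 //.
  by rewrite ler_peMr // mulr_ge0 // ltW.
have sCg : s <= C * expR (- g).
  apply: le_trans se _; rewrite ler_pdivrMr ?mulr_gt0 //.
  by apply: le_trans e4 _; rewrite expr2 le_eqVlt; apply/orP; left; apply/eqP; ring.
have sC : s < C by apply: le_lt_trans sCg _; rewrite gtr_pMr // expR_lt1 oppr_lt0.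
have lnCs : ln (C / s) = L + (ln 4 + ln C + g * ln (2 * L)).
  have L0 : 0 < L by lra.
  have ln4CP : ln (4 * C * P) = ln 4 + ln C + g * ln (2 * L).
    rewrite PE !lnM ?posrE ?mulr_gt0 ?powR_gt0 //; last by rewrite mulr_gt0.
    by rewrite ln_powR lnM ?posrE.
  have LE2 : L = ln C - ln e by rewrite -LE' lnCt.
  rewrite lnCt // sE lnCt ?mulr_gt0 // ln4CP; lra.
have lnCs0 : 0 <= ln (C / s) by rewrite ln_ge0 // ler_pdivlMr // mul1r ltW.
have eg0 := @expR_gt0 R 1.
have u1 : 1 <= ln u by rewrite -(expRK 1) ler_ln ?posrE ?expR_gt0 //; lra.
split => //.
  have : ln (C / s) `^ g <= P.
    rewrite PE ge0_ler_powR ?nnegrE ?(ltW g0) //; lra.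
  move=> H; apply: le_lt_trans (_ : C * s * P < e / 2).
    by rewrite ler_wpM2l // mulr_ge0 // ltW.
  rewrite sE cancel4 //; lra.
have LgP : L `^ g <= P.
  rewrite PE ge0_ler_powR ?nnegrE ?(ltW g0) //; lra.
rewrite sE rho_h //.
have [A AE] : exists A, A = 8 * C ^+ 2 * N.+1%:R + 1 by eexists.
rewrite -AE.
have c0 : 0 <= 8 * C ^+ 2 * N.+1%:R by rewrite mulr_ge0 // mulr_ge0 // sqr_ge0.
have A1 : 1 <= A by rewrite AE lerDr.
have Hle : 8 * C ^+ 2 * N.+1%:R * L `^ g * P + 1 <= A * P ^+ 2.
  have h1 : 8 * C ^+ 2 * N.+1%:R * L `^ g * P <= 8 * C ^+ 2 * N.+1%:R * P * P.
    by rewrite ler_wpM2r ?(ltW P0) // ler_wpM2l.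
  have h2 : 1 <= P * P by rewrite -[1]mulr1 ler_pM.
  rewrite AE expr2; lra.
have lnAP : ln (A * P ^+ 2) = ln A + (g * ln (2 * L)) *+ 2.
  by rewrite lnM ?posrE ?exprn_gt0 ?(lt_le_trans ltr01 A1) // lnXn // PE ln_powR.
apply: le_trans (_ : ln (A * P ^+ 2) <= _).
  rewrite ler_ln ?posrE ?mulr_gt0 ?exprn_gt0 ?(lt_le_trans ltr01 A1) //.
  apply: lt_le_trans (ltr01) _; rewrite lerDr mulr_ge0 // ?(ltW P0) //.
  by rewrite mulr_ge0 // powR_ge0.
rewrite lnAP.
have nA : ln A <= `|ln A| * ln u.
  by apply: le_trans (ler_norm _) _; rewrite ler_peMr.
have gL : g * ln (2 * L) <= g * (2 * ln u) by rewrite ler_pM2l.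
lra.
Qed.
Lemma pointwise {R : realType} {Y : Type} {d : Y -> Y -> R} {X : set Y} {N : nat}
  {C g : R} (δ e : R) :
  is_metric d -> 0 < C -> 0 < g -> 0 < δ ->
  (forall y, X y -> exists U (V : set 'rV[R]_N) phi psi,
     (forall x, U x -> V (phi x) /\ psi (phi x) = x) /\
     loglip d (@euclid R N) U phi C g /\ loglip (@euclid R N) d V psi C g /\
     forall eps, eps <= δ -> dball d eps y `&` X `<=` U) ->
  0 < e ->
  (3 + 5 * g + ln 4 + expR 1 + 3 * `|ln C| + `|ln (4 * C ^+ 2)| + `|ln δ|) ^+ 2
     < ln (e^-1) ->
  ln (doubling d e X) / ln (ln (e^-1)) <=
  N%:R * (`|ln (8 * C ^+ 2 * N.+1%:R + 1)| + 4 * g).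
Proof.
move=> dm C0 g0 δ0 Hch e0 HB.
have [eC eCg eδ e4 [ue LE L1 lnL key1]] := paramsA δ e C0 g0 δ0 e0 HB.
have [s [s0 sC sCg fs Hln]] :=
  @paramsB R N C g e (ln e^-1) (ln (C / e)) C0 g0 e0 e4 ue erefl LE L1 lnL key1.
have [Z ZE] : exists Z, Z = 2 * (C * e * ln (C / e) `^ g) / (s / N.+1%:R) by eexists.
rewrite -ZE in Hln.
have Z0 : 0 <= Z.
  rewrite ZE divr_ge0 //; last by rewrite divr_ge0 // ltW.
  by rewrite mulr_ge0 // mulr_ge0 ?powR_ge0 // mulr_ge0 // ltW.
have HD : doubling d e X <= ((Num.trunc Z).+1 ^ N)%:R.
  rewrite /doubling; case: (pselect (exists y, X y)) => [[y0 Xy0]|nX].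
    apply: ge_sup; first by exists (covnum d (e / 2) (dball d e y0 `&` X) X); exists y0.
    move=> _ [y Xy <-].
    have [U [V [phi [psi [hUV [lphi [lpsi hB]]]]]]] := Hch y Xy.
    rewrite ZE.
    exact: (@cover_bound R Y d X N C g U V phi psi e s y dm C0 g0 hUV lphi lpsi
      e0 eC eCg s0 sC sCg fs Xy (hB e eδ)).
  have -> : [set covnum d (e / 2) (dball d e x `&` X) X | x in X] = set0.
    by apply/seteqP; split => // z [y Xy _]; apply: nX; exists y.
  by rewrite sup0.
have eg0 := @expR_gt0 R 1.
have u1 : 1 <= ln (ln e^-1) by rewrite -(expRK 1) ler_ln ?posrE ?expR_gt0 //; lra.
rewrite ler_pdivrMr; last by lra.
have Q1 : 1 <= ((Num.trunc Z).+1 ^ N)%:R :> R by rewrite ler1n expn_gt0.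
apply: le_trans (_ : ln (((Num.trunc Z).+1 ^ N)%:R) <= _).
  case: (leP (doubling d e X) 0) => D0; first by rewrite ln0 // ln_ge0.
  by rewrite ler_ln ?posrE // (lt_le_trans ltr01 Q1).
rewrite natrX lnXn ?ltr0Sn //.
rewrite -[X in X <= _]mulr_natl -(mulrA (N%:R)) ler_wpM2l //.
apply: le_trans Hln.
rewrite ler_ln ?posrE ?ltr0Sn //; last by apply: lt_le_trans (ltr01) _; rewrite lerDr.
by rewrite -addn1 natrD lerD2r truncn_le.
Qed.
Theorem lemma3p2 (R : realType) (Y : Type) (d : Y -> Y -> R) (M X : set Y)
  (N : nat) :
  is_metric d -> loglip_manifold d M N -> X `<=` M -> mcompact d X ->
  (limf_esup (fun eps : R => (ln (doubling d eps X) / ln (ln (eps^-1)))%:E)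
     (0%R^'+) < +oo)%E.
Proof.
move=> dm [C [g [C0 g0 hch]]] XM mX.
have [δ δ0 Hδ] := uniform_chart dm hch XM mX.
have Hch : forall y, X y -> exists U (V : set 'rV[R]_N) phi psi,
     (forall x, U x -> V (phi x) /\ psi (phi x) = x) /\
     loglip d (@euclid R N) U phi C g /\ loglip (@euclid R N) d V psi C g /\
     forall eps, eps <= δ -> dball d eps y `&` X `<=` U.
  move=> y Xy; have [U [V [phi [psi [[_ _ hUV _ [lphi lpsi]] hB]]]]] := Hδ y Xy.
  by exists U, V, phi, psi.
set T := (3 + 5 * g + ln 4 + expR 1 + 3 * `|ln C| + `|ln (4 * C ^+ 2)| + `|ln δ|) ^+ 2.
set K := N%:R * (`|ln (8 * C ^+ 2 * N.+1%:R + 1)| + 4 * g).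
rewrite limf_esupE.
apply: (@le_lt_trans _ _ K%:E); last exact: ltry.
pose Vs := [set x : R | 0 < x < expR (- T)].
have FV : \forall x \near 0%R^'+, 0 < x < expR (- T).
  near=> x; apply/andP; split.
    by near: x; exact: nbhs_right_gt.
  by near: x; apply: nbhs_right_lt; exact: expR_gt0.
apply: (@le_trans _ _ (ereal_sup [set (ln (doubling d x X) / ln (ln (x^-1)))%:E | x in Vs])).
  by apply: ereal_inf_lbound; exists Vs.
apply: ge_ereal_sup => _ [x /andP[x0 xT] <-]; rewrite lee_fin.
apply: (pointwise δ x dm C0 g0 δ0 Hch x0).
rewrite lnV ?posrE //.
have : ln x < - T by rewrite -[- T]expRK ltr_ln ?posrE ?expR_gt0.
rewrite /T; lra.
Unshelve. all: end_near.
Qed.
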